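(* Let $\ell,n\in\mathbb{Z}_{\ge0}$ with $\ell\ge n$ and let $1\le k<n$. There is a family of skew polynomials $\{g_{\underline e,k+1}\in\mathrm{SkPol}_{k+1}\mid \underline e=(e_k,\dots,e_1)\in\{0,1\}^k\}$ such that (1) each $g_{\underline e,k+1}$ is a polynomial in $t_{k+1}$ of degree $\ell-k+\ell(\underline e)$ whose leading coefficient is invertible and whose other coefficients lie in $\mathrm{SkPol}_k$; and (2) $\sum_{\underline e}g_{\underline e,k+1}\,\tau_{\underline{S_k}^{\underline e}}=0$ in $\mathrm{ONH}_n^\ell$ (where $g_{\underline e,k+1}$ acts by substituting $x_j$ for $t_j$).
   Context: $\mathbf{k}$ is a field of characteristic $\neq2$. $\mathrm{ONH}_n$ is the unital $\mathbf{k}$-algebra with generators $\tau_1,\dots,\tau_{n-1},x_1,\dots,x_n$ and relations $\tau_i^2=0$; $\tau_i\tau_{i+1}\tau_i=\tau_{i+1}\tau_i\tau_{i+1}$; $x_i\tau_i+\tau_ix_{i+1}=1$; $\tau_ix_i+x_{i+1}\tau_i=1$; $x_ix_j+x_jx_i=0$ ($i\ne j$); $\tau_i\tau_j+\tau_j\tau_i=0$ ($|i-j|>1$); $x_i\tau_j+\tau_jx_i=0$ ($i\ne j,j+1$). $\mathrm{ONH}_n^\ell$ is its quotient by the two-sided ideal generated by $x_1^\ell$. $\mathrm{SkPol}_a=\mathbb{Z}\langle t_1,\dots,t_a\rangle/(t_it_j+t_jt_i,\ i\ne j)$, with $\mathrm{SkPol}_a\subset\mathrm{SkPol}_{a+1}$;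 it acts on $\mathrm{ONH}_n^\ell$ by multiplication after substituting $x_j$ for $t_j$. For $\underline e=(e_k,\dots,e_1)\in\{0,1\}^k$, $\ell(\underline e)=\sum_ie_i$ and $\tau_{\underline{S_k}^{\underline e}}=\tau_{s_k^{e_k}}\tau_{s_{k-1}^{e_{k-1}}}\cdots\tau_{s_1^{e_1}}$, where $\tau_{s_j^1}=\tau_j$ and $\tau_{s_j^0}=1$. *)

(* Defs.v *)
From HB Require Import structures.
From mathcomp Require Import all_boot all_order all_algebra.
From mathcomp Require Import mpoly.
Set Implicit Arguments. Unset Strict Implicit. Unset Printing Implicit Defensive.
Import Order.TTheory GRing.Theory.
Local Open Scope ring_scope.

(* ---------- SkPol_a ----------
   SkPol_a = Z<t_1..t_a>/(t_i t_j + t_j t_i, i<>j) is a free Z-module with basis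
   the ordered monomials t^m := t_1^(m 0) t_2^(m 1) ... t_a^(m (a-1)).
   We represent an element by its coordinates in this basis, i.e. by an element
   of {mpoly int[a]} where the monomial 'X_[m] stands for the ORDERED product t^m. *)
Definition SkPol (a : nat) := {mpoly int[a]}.

Definition sk_sign (a : nat) (m m' : 'X_{1..a}) : int :=
  (-1) ^+ (\sum_(i < a) \sum_(j < a | (j < i)%N) (m i * m' j))%N.

Definition skmul (a : nat) (p q : SkPol a) : SkPol a :=
  \sum_(m <- msupp p) \sum_(m' <- msupp q)
     (sk_sign m m' * p@_m * q@_m') *: 'X_[(m + m')%MM].

Definition skunit (a : nat) (p : SkPol a) : Prop :=
  exists q : SkPol a, skmul p q = 1 /\ skmul q p = 1.

(* Action of SkPol_a on a ring A: substitute x_j for t_j (1-based: t_j = x (j)). *)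
Definition sk_eval (A : pzRingType) (a : nat) (x : nat -> A) (p : SkPol a) : A :=
  \sum_(m <- msupp p) (p@_m)%:~R * \prod_(i < a) x i.+1 ^+ m i.

(* An element of SkPol_(k+1) written as a polynomial in t_(k+1) with coefficients
   in SkPol_k, placed on the left:  g = sum_i c_i t_(k+1)^i, with c = coefficient list. *)
Definition skt_eval (A : pzRingType) (k : nat) (x : nat -> A) (c : seq (SkPol k)) : A :=
  \sum_(i < size c) sk_eval x (nth 0 c i) * x k.+1 ^+ i.

(* ---------- ONH_n^ell via its presentation ----------
   Generators tau_1..tau_(n-1), x_1..x_n (1-based indices; tau i, x i). *)
Definition ONH_rel (A : pzRingType) (n : nat) (tau x : nat -> A) : Prop :=
  (forall i, (1 <= i < n)%N -> tau i * tau i = 0) /\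
      (forall i, (1 <= i)%N -> (i.+1 < n)%N ->
          tau i * tau i.+1 * tau i = tau i.+1 * tau i * tau i.+1) /\
      (forall i, (1 <= i < n)%N -> x i * tau i + tau i * x i.+1 = 1) /\
      (forall i, (1 <= i < n)%N -> tau i * x i + x i.+1 * tau i = 1) /\
      (forall i j, (1 <= i <= n)%N -> (1 <= j <= n)%N -> i != j ->
          x i * x j + x j * x i = 0) /\
      (forall i j, (1 <= i < n)%N -> (1 <= j < n)%N -> (i.+1 < j \/ j.+1 < i)%N ->
          tau i * tau j + tau j * tau i = 0) /\
      (forall i j, (1 <= i <= n)%N -> (1 <= j < n)%N -> i != j -> i != j.+1 ->
          x i * tau j + tau j * x i = 0).

Definition ONH_cyc_rel (A : pzRingType) (n ell : nat) (tau x : nat -> A) : Prop :=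
  ONH_rel n tau x /\ x 1%N ^+ ell = 0.

(* tau_{S_k^e} = tau_{s_k^{e_k}} ... tau_{s_1^{e_1}}, with e i meaning e_(i+1). *)
Definition tauS (A : pzRingType) (k : nat) (tau : nat -> A) (e : {ffun 'I_k -> bool}) : A :=
  \big[*%R/1]_(i <- rev (enum 'I_k)) (if e i then tau i.+1 else 1).

Definition len_e (k : nat) (e : {ffun 'I_k -> bool}) : nat := #|[pred i | e i]|.

(* Main.v *)
Require Import Defs.
From HB Require Import structures.
From mathcomp Require Import all_boot all_order all_algebra.
From mathcomp Require Import mpoly.
From mathcomp Require Import zify.
Import GRing.Theory.
Local Open Scope ring_scope.
Set Warnings "-notation-overridden -ambiguous-paths -notation-incompatible-prefix -deprecated".
Set Implicit Arguments. Unset Strict Implicit. Unset Printing Implicit Defensive.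

Section Alg.
Variables (A : pzRingType) (n : nat) (tau x : nat -> A).
Hypothesis H : ONH_rel n tau x.

Lemma sgnC (a b : A) p : a * ((-1) ^+ p * b) = (-1) ^+ p * (a * b).
Proof. by rewrite mulrA (commr_sign a p) -mulrA. Qed.

Lemma anti_tx (J l : nat) : (J.+1 < n)%N -> (1 <= l <= J)%N ->
  tau J.+1 * x l = - (x l * tau J.+1).
Proof.
move=> HJ /andP[l1 lJ].
have [_ [_ [_ [_ [_ [_ H7]]]]]] := H.
have E := H7 l J.+1.
have h1 : (1 <= l <= n)%N by rewrite l1 (leq_trans lJ (ltnW (ltnW HJ))).
have h2 : (1 <= J.+1 < n)%N by rewrite HJ.
have h3 : l != J.+1 by rewrite neq_ltn ltnS lJ.
have h4 : l != J.+2 by rewrite neq_ltn ltnS (leq_trans lJ (leqnSn J)).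
move: (E h1 h2 h3 h4) => /eqP; rewrite addr_eq0 => /eqP ->.
by rewrite opprK.
Qed.

Lemma tau_xpow (J l p : nat) : (J.+1 < n)%N -> (1 <= l <= J)%N ->
  tau J.+1 * x l ^+ p = (-1) ^+ p * (x l ^+ p * tau J.+1).
Proof.
move=> HJ Hl; elim: p => [|p IH]; first by rewrite !expr0 !mul1r mulr1.
rewrite exprSr mulrA IH.
have E : x l ^+ p * tau J.+1 * x l = - (x l ^+ p * x l * tau J.+1).
  by rewrite -mulrA anti_tx // mulrN mulrA.
rewrite -(mulrA ((-1) ^+ p)) E exprSr mulrN1 mulrN mulNr.
by [].
Qed.

Lemma tau_prod (J j : nat) (s : nat -> nat) : (J.+1 < n)%N -> (j <= J)%N ->
  tau J.+1 * \prod_(i < j) x i.+1 ^+ s i =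
  (-1) ^+ (\sum_(i < j) s i)%N * (\prod_(i < j) x i.+1 ^+ s i * tau J.+1).
Proof.
move=> HJ; elim: j => [|j IH] Hj.
  by rewrite !big_ord0 expr0 mul1r mulr1 mul1r.
rewrite !big_ord_recr /= mulrA IH ?(ltnW Hj) // -!mulrA tau_xpow //.
rewrite exprD -!mulrA; congr (_ * _).
by rewrite sgnC.
Qed.

Lemma zy_pow (J i : nat) : (J.+2 <= n)%N ->
  x J.+2 ^+ i * x J.+1 = (-1) ^+ i * (x J.+1 * x J.+2 ^+ i).
Proof.
move=> HJ.
have [_ [_ [_ [_ [H5 _]]]]] := H.
have Hzy : x J.+2 * x J.+1 = - (x J.+1 * x J.+2).
  have h1 : (0 < J.+2 <= n)%N by rewrite HJ.
  have h2 : (0 < J.+1 <= n)%N by rewrite /=; apply: ltnW.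
  have h3 : J.+2 != J.+1 by rewrite eq_sym neq_ltn ltnSn.
  by move: (H5 _ _ h1 h2 h3) => /eqP; rewrite addr_eq0 => /eqP ->.
elim: i => [|i IH]; first by rewrite !expr0 !mul1r mulr1.
rewrite exprS -mulrA IH sgnC mulrA Hzy mulNr exprS mulN1r mulNr.
by rewrite mulrN !mulrA.
Qed.

Lemma tau_ypow (J m : nat) : (J.+2 <= n)%N ->
  tau J.+1 * x J.+1 ^+ m =
  \sum_(i < m) (-1) ^+ (i * (m - i)) * (x J.+1 ^+ (m - i).-1 * x J.+2 ^+ i)
  + (-1) ^+ m * (x J.+2 ^+ m * tau J.+1).
Proof.
move=> HJ.
have [_ [_ [_ [H4 _]]]] := H.
have Hty : tau J.+1 * x J.+1 = 1 - x J.+2 * tau J.+1.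
  by rewrite -(H4 J.+1) ?addrK // HJ.
elim: m => [|m IH].
  by rewrite big_ord0 add0r !expr0 !mul1r mulr1.
rewrite exprSr mulrA IH mulrDl big_ord_recr /= subSnn muln1 /= expr0 mul1r.
rewrite -addrA; congr (_ + _).
  rewrite mulr_suml; apply: eq_bigr => i _.
  have Hi : (i < m)%N := ltn_ord i.
  rewrite -!mulrA zy_pow // sgnC mulrA -exprSr.
  rewrite mulrA -exprD.
  have -> : (m.+1 - i = (m - i).+1)%N by rewrite subSn // ltnW.
  have -> : ((m - i).-1.+1 = m - i)%N by rewrite prednK // subn_gt0.
  by rewrite mulnS addnC.
rewrite -!mulrA Hty mulrBr mulr1 mulrBr exprS mulN1r mulNr.
by rewrite exprSr !mulrA.
Qed.

End Alg.

Definition term := (int * (nat -> nat))%type.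
Definition ev (A : pzRingType) (x : nat -> A) (L : nat) (t : term) : A :=
  (t.1)%:~R * \prod_(i < L) x i.+1 ^+ t.2 i.
Definition upd (s : nat -> nat) (j a b : nat) : nat -> nat :=
  fun l => if l == j then a else if l == j.+1 then b else s l.
Definition psum (s : nat -> nat) (j : nat) : nat := (\sum_(i < j) s i)%N.
Definition Tstep (j : nat) (t : term) : term :=
  (t.1 * (-1) ^+ (psum t.2 j + t.2 j), upd t.2 j 0 (t.2 j)).
Definition Dstep (j : nat) (t : term) : seq term :=
  [seq (t.1 * (-1) ^+ (psum t.2 j + i * (t.2 j - i)), upd t.2 j (t.2 j - i).-1 i)
  | i <- rev (iota 0 (t.2 j))].

Lemma ev_split (A : pzRingType) (x : nat -> A) j c s :
  ev x j.+1 (c, s) = c%:~R * (\prod_(i < j) x i.+1 ^+ s i * x j.+1 ^+ s j).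
Proof. by rewrite /ev big_ord_recr. Qed.

Lemma ev_upd (A : pzRingType) (x : nat -> A) j c s a b :
  ev x j.+2 (c, upd s j a b) =
  c%:~R * (\prod_(i < j) x i.+1 ^+ s i * x j.+1 ^+ a * x j.+2 ^+ b).
Proof.
rewrite /ev !big_ord_recr /= /upd eqxx.
have -> : (j.+1 == j) = false by rewrite gtn_eqF.
rewrite eqxx; congr (_ * (_ * _ * _)); apply: eq_bigr => i _.
have Hi : (i < j)%N := ltn_ord i.
by rewrite ltn_eqF // ltn_eqF // (ltn_trans Hi).
Qed.

Lemma key_step (A : pzRingType) (n : nat) (tau x : nat -> A) (J : nat) (t : term) :
  ONH_rel n tau x -> (J.+2 <= n)%N ->
  tau J.+1 * ev x J.+1 t =
  \sum_(u <- Dstep J t) ev x J.+2 u + ev x J.+2 (Tstep J t) * tau J.+1.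
Proof.
move=> H HJ; case: t => c s.
rewrite ev_split mulrA mulrzr -mulrzl -mulrA (mulrA (tau J.+1)) (tau_prod H) // -mulrA.
rewrite -(mulrA (\prod_(i < J) _)) (tau_ypow H) //.
rewrite /Dstep /Tstep big_map big_rev /= /index_iota.
have -> : iota 0 (s J) = index_iota 0 (s J) by rewrite /index_iota subn0.
rewrite big_mkord.
rewrite ev_upd expr0 mulr1 intrM intr_sign.
rewrite !mulrDr mulr_sumr mulr_sumr mulr_sumr; congr (_ + _).
  apply: eq_bigr => i _.
  rewrite (sgnC (\prod_(i0 < J) _)) ev_upd intrM intr_sign exprD /psum.
  by rewrite !mulrA.
by rewrite (sgnC (\prod_(i0 < J) _)) exprD /psum !mulrA.
Qed.

Definition restr (j : nat) (e : {ffun 'I_j.+1 -> bool}) : {ffun 'I_j -> bool} :=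
  [ffun i => e (widen_ord (leqnSn j) i)].
Definition extn (j : nat) (e : {ffun 'I_j -> bool}) (b : bool) : {ffun 'I_j.+1 -> bool} :=
  [ffun i : 'I_j.+1 => if unlift ord_max i is Some i' then e i' else b].

Lemma widen_lift (j : nat) (i : 'I_j) : widen_ord (leqnSn j) i = lift ord_max i.
Proof. by apply: val_inj; rewrite /= /bump leqNgt ltn_ord. Qed.

Lemma restr_extn j e b : restr (@extn j e b) = e.
Proof. by apply/ffunP => i; rewrite !ffunE widen_lift liftK. Qed.

Lemma extn_max j e b : (@extn j e b) ord_max = b.
Proof. by rewrite ffunE unlift_none. Qed.

Lemma extn_restr j (e : {ffun 'I_j.+1 -> bool}) : extn (restr e) (e ord_max) = e.
Proof.
apply/ffunP => i; rewrite ffunE.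
case: unliftP => [i' ->|-> //]; by rewrite ffunE widen_lift.
Qed.

Lemma sum_ffunS (R : nmodType) j (F : {ffun 'I_j.+1 -> bool} -> R) :
  \sum_(e : {ffun 'I_j.+1 -> bool}) F e =
  \sum_(e : {ffun 'I_j -> bool}) (F (extn e true) + F (extn e false)).
Proof.
rewrite (reindex (fun p : bool * {ffun 'I_j -> bool} => extn p.2 p.1)) /=; last first.
  apply: onW_bij; exists (fun e : {ffun 'I_j.+1 -> bool} => (e ord_max, restr e)).
    by case=> b e /=; rewrite restr_extn extn_max.
  by move=> e /=; rewrite extn_restr.
rewrite -(pair_bigA _ (fun b e => F (extn e b))) big_bool /=.
by rewrite big_split.
Qed.

Lemma tauS_S (A : pzRingType) (tau : nat -> A) j (e : {ffun 'I_j.+1 -> bool}) :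
  tauS tau e = (if e ord_max then tau j.+1 else 1) * tauS tau (restr e).
Proof.
rewrite /tauS enum_ordSr rev_rcons big_cons /=; congr (_ * _).
rewrite -map_rev big_map; apply: eq_bigr => i _.
by rewrite ffunE.
Qed.

Lemma len_e_S j (e : {ffun 'I_j.+1 -> bool}) :
  len_e e = (len_e (restr e) + e ord_max)%N.
Proof.
rewrite /len_e -!sum1_card !big_mkcond /= big_ord_recr /=; congr (_ + _)%N.
  by rewrite [RHS]big_mkcond; apply: eq_bigr => i _; rewrite !inE ffunE.
Qed.

Definition Inv (j D : nat) (L : seq term) : Prop :=
  exists c s0 rest, [/\ L = (c, s0) :: rest, c * c = 1, s0 j = D,
    (forall l, l != j -> s0 l = 0%N) & all (fun t : term => (t.2 j < D)%N) rest].

Lemma sgn_sq (c : int) p : c * c = 1 -> (c * (-1) ^+ p) * (c * (-1) ^+ p) = 1.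
Proof.
move=> Hc; rewrite mulrACA Hc mul1r -exprD addnn -mul2n mulnC exprM sqrr_sign //.
Qed.

Lemma psum0 (s : nat -> nat) j : (forall l, l != j -> s l = 0%N) -> psum s j = 0%N.
Proof.
move=> Hs; rewrite /psum big1 // => i _; apply: Hs; by rewrite ltn_eqF.
Qed.

Lemma Inv_T j D L : Inv j D L -> Inv j.+1 D (map (Tstep j) L).
Proof.
case=> c [s0 [rest [-> Hc Hs0 Hz Hall]]].
exists (c * (-1) ^+ (psum s0 j + s0 j)), (upd s0 j 0 (s0 j)), (map (Tstep j) rest).
split => //.
- exact: sgn_sq.
- by rewrite /upd (gtn_eqF (ltnSn j)) eqxx.
- move=> l Hl; rewrite /upd (negbTE Hl); case: ifP => // /negbT; exact: Hz.
- rewrite all_map; apply: sub_all Hall => t /= Ht.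
  by rewrite /upd (gtn_eqF (ltnSn j)) eqxx.
Qed.

Lemma all_Dstep j D t : (t.2 j < D)%N ->
  all (fun u : term => (u.2 j.+1 < D.-1)%N) (Dstep j t).
Proof.
move=> Ht; rewrite /Dstep all_map all_rev; apply/allP => i.
rewrite mem_iota add0n /= => Hi.
rewrite /upd (gtn_eqF (ltnSn j)) eqxx.
by rewrite -ltnS prednK ?(leq_trans Hi) // (leq_ltn_trans _ Ht).
Qed.

Lemma all_flatten_Dstep j D rest :
  all (fun t : term => (t.2 j < D)%N) rest ->
  all (fun u : term => (u.2 j.+1 < D.-1)%N) (flatten (map (Dstep j) rest)).
Proof.
elim: rest => [//|t rest IH] /= /andP[Ht Hr].
by rewrite all_cat all_Dstep // IH.
Qed.

Lemma Inv_D j D L : (0 < D)%N -> Inv j D L -> Inv j.+1 D.-1 (flatten (map (Dstep j) L)).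
Proof.
move=> HD; case=> c [s0 [rest [-> Hc Hs0 Hz Hall]]].
have Hiota : rev (iota 0 (s0 j)) = D.-1 :: rev (iota 0 D.-1).
  by rewrite Hs0 -{1}(prednK HD) -addn1 iotaD rev_cat /= add0n.
exists (c * (-1) ^+ (psum s0 j + D.-1 * (s0 j - D.-1))), (upd s0 j (s0 j - D.-1).-1 D.-1),
  ([seq (c * (-1) ^+ (psum s0 j + i * (s0 j - i)), upd s0 j (s0 j - i).-1 i)
   | i <- rev (iota 0 D.-1)] ++ flatten (map (Dstep j) rest)).
split => //.
- by rewrite /= /Dstep /= Hiota.
- exact: sgn_sq.
- by rewrite /upd (gtn_eqF (ltnSn j)) eqxx.
- move=> l Hl; rewrite /upd (negbTE Hl); case: ifP => [_|/negbT]; last exact: Hz.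
  by rewrite Hs0 -{1}(prednK HD) subSnn.
- rewrite all_cat all_flatten_Dstep // andbT all_map all_rev; apply/allP => i.
  rewrite mem_iota add0n /= => Hi.
  by rewrite /upd (gtn_eqF (ltnSn j)) eqxx.
Qed.

Lemma len_e0 (e : {ffun 'I_0 -> bool}) : len_e e = 0%N.
Proof. by rewrite /len_e; apply: eq_card0 => -[]. Qed.

Lemma level (n ell j : nat) : (j < n)%N -> (n <= ell)%N ->
  exists P : {ffun 'I_j -> bool} -> seq term,
   (forall e, Inv j (ell - j + len_e e) (P e)) /\
   (forall (A : pzRingType) (tau x : nat -> A), ONH_cyc_rel n ell tau x ->
      \sum_(e : {ffun 'I_j -> bool}) (\sum_(t <- P e) ev x j.+1 t) * tauS tau e = 0).
Proof.
move=> + Hln; elim: j => [|j IH] Hj.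
  exists (fun _ => [:: (1, fun l => if l == 0%N then ell else 0%N)]); split.
    move=> e; rewrite len_e0 subn0 addn0.
    exists 1, (fun l => if l == 0%N then ell else 0%N), [::]; split => //.
    by move=> l /negbTE ->.
  move=> A tau x [_ Hx]; apply: big1 => e _.
  by rewrite big_seq1 /ev big_ord1 /= Hx mulr0 mul0r.
have [P [HP HR]] := IH (ltnW Hj).
have Hjl : (j < ell)%N by rewrite (leq_trans (ltnW Hj)).
exists (fun e : {ffun 'I_j.+1 -> bool} => if e ord_max then map (Tstep j) (P (restr e))
                 else flatten (map (Dstep j) (P (restr e)))); split.
  move=> e; rewrite len_e_S; case: (e ord_max).
    have -> : (ell - j.+1 + (len_e (restr e) + true) = ell - j + len_e (restr e))%N.
      by case: (e ord_max) => /=; lia.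
    exact: Inv_T.
  rewrite addn0.
  have -> : (ell - j.+1 + len_e (restr e) = (ell - j + len_e (restr e)).-1)%N.
    by lia.
  apply: Inv_D => //; by rewrite addn_gt0 subn_gt0 Hjl.
move=> A tau x [Hrel Hx].
rewrite sum_ffunS.
transitivity (tau j.+1 * (\sum_(e : {ffun 'I_j -> bool}) (\sum_(t <- P e) ev x j.+1 t) * tauS tau e)); last first.
  by rewrite (HR A tau x) ?mulr0.
rewrite mulr_sumr; apply: eq_bigr => e _.
rewrite !tauS_S !restr_extn !extn_max big_map big_flatten /= big_map mul1r.
rewrite mulrA -mulrDl mulrA; congr (_ * _).
rewrite mulr_suml mulr_sumr -big_split /=; apply: eq_bigr => t _.
by rewrite (key_step _ Hrel) // addrC.
Qed.

Definition mnm_of (k : nat) (s : nat -> nat) : 'X_{1..k} := [multinom s i | i < k].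
Definition coefs (k D : nat) (L : seq term) : seq (SkPol k) :=
  [seq \sum_(t <- L | t.2 k == i) t.1 *: 'X_[mnm_of k t.2] | i <- iota 0 D.+1].

Lemma size_coefs k D L : size (coefs k D L) = D.+1.
Proof. by rewrite size_map size_iota. Qed.

Lemma sum_none k D (rest : seq term) (F : term -> SkPol k) :
  all (fun t : term => (t.2 k < D)%N) rest -> \sum_(t <- rest | t.2 k == D) F t = 0.
Proof.
elim: rest => [|t rest IH] /=; first by rewrite big_nil.
by case/andP => Ht Hr; rewrite big_cons (ltn_eqF Ht) IH.
Qed.

Lemma last_coefs k D L : Inv k D L ->
  exists c : int, c * c = 1 /\ last 0 (coefs k D L) = c%:MP.
Proof.
case=> c [s0 [rest [-> Hc Hs0 Hz Hall]]]; exists c; split => //.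
rewrite /coefs -addn1 iotaD map_cat last_cat /= add0n big_cons /= Hs0 eqxx.
rewrite sum_none // addr0.
have -> : mnm_of k s0 = 0%MM.
  by apply/mnmP => i; rewrite mnmE mnm0E Hz // ltn_eqF.
by rewrite mpolyX0 -alg_mpolyC.
Qed.

Lemma skunitC k (c : int) : c * c = 1 -> skunit (c%:MP : SkPol k).
Proof.
move=> Hc; exists c%:MP.
have Hc0 : c != 0 by apply/eqP => E; move: Hc; rewrite E mulr0.
suff E : skmul (c%:MP : SkPol k) c%:MP = 1 by split.
rewrite /skmul msuppC (negbTE Hc0) !big_seq1 mcoeffC eqxx mulr1 addm0 mpolyX0.
have -> : sk_sign (0%MM : 'X_{1..k}) 0%MM = 1.
  rewrite /sk_sign big1 ?expr0 // => i _; apply: big1 => j _.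
  by rewrite mnm0E mul0n.
by rewrite mul1r Hc scale1r.
Qed.

Lemma sk_eval_term (A : nzRingType) (x : nat -> A) k (L : seq term) (P : pred term) :
  sk_eval x (\sum_(t <- L | P t) t.1 *: 'X_[mnm_of k t.2]) =
  \sum_(t <- L | P t) t.1%:~R * \prod_(i < k) x i.+1 ^+ t.2 i.
Proof.
have E : forall p : SkPol k, sk_eval x p = mmap intr (fun i : 'I_k => x i.+1) p by [].
rewrite E raddf_sum /=; apply: eq_bigr => t _.
rewrite mmapZ mmapX /mmap1; congr (_ * _); apply: eq_bigr => i _.
by rewrite mnmE.
Qed.

Lemma sum_pick (A : nzRingType) D (G : nat -> A) m : (m <= D)%N ->
  \sum_(i < D.+1) (if m == i then G i else 0) = G m.
Proof.
move=> Hm; rewrite -big_mkcond /= (big_pred1 (Ordinal (Hm : (m < D.+1)%N))) //.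
Qed.

Lemma skt_coefs (A : nzRingType) (x : nat -> A) k D (L : seq term) :
  all (fun t : term => (t.2 k <= D)%N) L ->
  skt_eval x (coefs k D L) = \sum_(t <- L) ev x k.+1 t.
Proof.
move=> Hall; rewrite /skt_eval size_coefs.
transitivity (\sum_(i < D.+1) \sum_(t <- L)
   (if t.2 k == i then t.1%:~R * \prod_(l < k) x l.+1 ^+ t.2 l * x k.+1 ^+ i else 0)).
  apply: eq_bigr => i _.
  rewrite (nth_map 0%N) ?size_iota // nth_iota // add0n sk_eval_term mulr_suml.
  by rewrite big_mkcond.
rewrite exchange_big /=.
elim: L Hall => [|t L IH] /=; first by rewrite !big_nil.
case/andP => Ht HL; rewrite !big_cons IH //; congr (_ + _).
rewrite (sum_pick (fun i => t.1%:~R * \prod_(l < k) x l.+1 ^+ t.2 l * x k.+1 ^+ i)) //.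
by case: t Ht => c s /= _; rewrite ev_split mulrA.
Qed.

Lemma Inv_all k D L : Inv k D L -> all (fun t : term => (t.2 k <= D)%N) L.
Proof.
case=> c [s0 [rest [-> Hc Hs0 Hz Hall]]] /=; rewrite Hs0 leqnn /=.
by apply: sub_all Hall => t /ltnW.
Qed.

Theorem lemma4p8 (K : fieldType) (HK : (2 : K) != 0) (ell n k : nat)
    (Hln : (n <= ell)%N) (Hk1 : (1 <= k)%N) (Hkn : (k < n)%N) :
  exists g : {ffun 'I_k -> bool} -> seq (SkPol k),
    (forall e, size (g e) = (ell - k + len_e e).+1 /\ skunit (last 0 (g e))) /\
    (forall (A : algType K) (tau x : nat -> A), ONH_cyc_rel n ell tau x ->
       \sum_(e : {ffun 'I_k -> bool}) skt_eval x (g e) * tauS tau e = 0).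
Proof.
have [P [HP HR]] := level Hkn Hln.
exists (fun e => coefs k (ell - k + len_e e) (P e)); split.
  move=> e; split; first exact: size_coefs.
  have [c [Hc ->]] := last_coefs (HP e).
  exact: skunitC.
move=> A tau x Hrel.
transitivity (\sum_(e : {ffun 'I_k -> bool}) (\sum_(t <- P e) ev x k.+1 t) * tauS tau e).
  apply: eq_bigr => e _; congr (_ * _).
  exact/skt_coefs/Inv_all/HP.
exact: (HR A tau x Hrel).
Qed.
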